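(* Under the setting and Assumptions A1–A4 described in the context, let $\{\mathcal{X}^t\}$ be generated by the TNNR iteration, set $\delta_t=\mu^t\theta_1^t/2$ and $H_{\delta_{t+1}}(\mathcal{X}^{t+1},\mathcal{X}^t)=F(\mathcal{X}^{t+1})+\delta_{t+1}\|\mathcal{X}^{t+1}-\mathcal{X}^t\|^2$. Then (i) for all $t\ge 0$, $H_{\delta_{t+1}}(\mathcal{X}^{t+1},\mathcal{X}^t)-H_{\delta_t}(\mathcal{X}^t,\mathcal{X}^{t-1})\le-\frac{\varepsilon L_f}{2}\|\mathcal{X}^{t+1}-\mathcal{X}^t\|^2$; in particular the sequence $H_{\delta_{t+1}}(\mathcal{X}^{t+1},\mathcal{X}^t)$ is monotonically nonincreasing; (ii) $\lim_{t\to\infty}(\mathcal{X}^t-\mathcal{X}^{t+1})=0$.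
   Context: Tensors: fix positive integers $n_1,n_2,n_3$, let $r=\min\{n_1,n_2\}$. For $\mathcal{X}\in\mathbb{R}^{n_1\times n_2\times n_3}$, $\|\mathcal{X}\|$ is the Frobenius norm (square root of the sum of squared entries) and $\langle\cdot,\cdot\rangle$ the entrywise inner product. $\bar{\mathcal{X}}\in\mathbb{C}^{n_1\times n_2\times n_3}$ is the (unnormalized) discrete Fourier transform of $\mathcal{X}$ along the third mode, $\bar{\mathcal{X}}(i,j,:)=F_{n_3}\mathcal{X}(i,j,:)$ with $F_{n_3}$ the $n_3\times n_3$ DFT matrix $(\omega^{(p-1)(q-1)})_{p,q}$, $\omega=e^{-2\pi\sqrt{-1}/n_3}$; $\bar X^{(k)}$ is its $k$-th frontal slice, and $\sigma_i^k(\mathcal{X})$ denotes the $i$-th largest singular value of $\bar X^{(k)}$, $i\in[r]$, $k\in[n_3]$. Assumption A1: $\rho:[0,\infty)\to[0,\infty)$ is differentiable and concave, $\rho'$ is Lipschitz continuous with constant $L_g$, and $\rho'(t)>0$ for all $t\ge 0$. Assumption A2: $f:\mathbb{R}^{n_1\times n_2\times n_3}\to[0,\infty)$ is continuously differentiable and $\nabla f$ is $L_f$-Lipschitz ($L_f>0$). Objective: for $\lambda>0$, $F(\mathcal{X})=\lambda\sum_{k=1}^{n_3}\rho\Big(\sum_{i=1}^r\rho\big(\rho(\sigma_i^k(\mathcal{X}))\big)\Big)+f(\mathcal{X})$. Assumption A3: $F$ is coercive ($F(\mathcal{X})\to+\infty$ as $\|\mathcal{X}\|\to\infty$) and bounded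 below. Weighted function: for weights $\alpha=(\alpha_k)_{k\in[n_3]}$, $\beta=(\beta_i^k)$, $\|\mathcal{X}\|_{\rho_\alpha^\beta}=\sum_{k=1}^{n_3}\sum_{i=1}^r\alpha_k\beta_i^k\rho(\sigma_i^k(\mathcal{X}))$. TNNR iteration: start from $\mathcal{X}^0$ and set $\mathcal{X}^{-1}=\mathcal{X}^0$; for every $t\ge 0$ the weights are $\alpha_k^t=\rho'\big(\sum_{i=1}^r\rho(\rho(\sigma_i^k(\mathcal{X}^t)))\big)$, $\beta_i^{k,t}=\rho'\big(\rho(\sigma_i^k(\mathcal{X}^t))\big)$, and $\mathcal{Y}^t=\mathcal{X}^t+\theta_1^t(\mathcal{X}^t-\mathcal{X}^{t-1})$, $\mathcal{Z}^t=\mathcal{X}^t+\theta_2^t(\mathcal{X}^t-\mathcal{X}^{t-1})$, $\mathcal{X}^{t+1}\in\arg\min_{\mathcal{X}}\ \lambda\|\mathcal{X}\|_{\rho_{\alpha^t}^{\beta^t}}+\langle\mathcal{X}-\mathcal{Y}^t,\nabla f(\mathcal{Z}^t)\rangle+\frac{\mu^t}{2}\|\mathcal{X}-\mathcal{Y}^t\|^2$ (a global minimizer). Assumption A4: for some fixed $\varepsilon\in(0,1)$ and all $t$: $\theta_1^t\in[0,(1-\varepsilon)/2)$, $\theta_2^t\in[0,1/2]$, $(\mu^t)$ is nonincreasing and $\mu^0\ge\mu^t\ge\max\{\theta_2^tL_f/\theta_1^t,\ (1-\theta_2^t)L_f/(1-\theta_1^t-\theta_1^{t+1}-\varepsilon)\}$.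 *)

(* Defs.v *)
From HB Require Import structures.
From mathcomp Require Import all_boot all_order all_algebra.
From mathcomp Require Import all_classical all_reals all_analysis.
From mathcomp Require Import complex.
From mathcomp Require Import sesquilinear spectral.

Set Implicit Arguments.
Unset Strict Implicit.
Unset Printing Implicit Defensive.

Import Order.TTheory GRing.Theory Num.Theory.
Import numFieldNormedType.Exports.
Local Open Scope classical_set_scope.
Local Open Scope ring_scope.
Local Open Scope sesquilinear_scope.

Section Tensors.
Variables (R : realType) (n1 n2 n3 : nat).

Definition tensor := {ffun 'I_n1 * 'I_n2 * 'I_n3 -> R}.

Definition tdot (X Y : tensor) : R :=
  \sum_(i < n1) \sum_(j < n2) \sum_(k < n3) X (i, j, k) * Y (i, j, k).
Definition tnorm (X : tensor) : R := Num.sqrt (tdot X X).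

Definition omega : R[i] :=
  (cos (2 * pi / n3%:R) -i* sin (2 * pi / n3%:R))%C.

(* unnormalised DFT along the third mode (0-based indices):
   Xbar(i,j,p) = sum_q omega^(p q) X(i,j,q) *)
Definition tdft (X : tensor) (i : 'I_n1) (j : 'I_n2) (p : 'I_n3) : R[i] :=
  \sum_(q < n3) omega ^+ (p * q) * ((X (i, j, q))%:C)%C.

Definition fslice (X : tensor) (k : 'I_n3) : 'M[R[i]]_(n1, n2) :=
  \matrix_(i, j) tdft X i j k.

Definition r := minn n1 n2.

(* rectangular n1 x n2 "diagonal" matrix with diagonal s_0, ..., s_(r-1) *)
Definition rect_diag (s : {ffun 'I_r -> R}) : 'M[R[i]]_(n1, n2) :=
  \matrix_(i, j)
    if (i == j :> nat) then
      (if @insub nat (fun m => m < r)%N _ (nat_of_ord i) is Some k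
       then ((s k)%:C)%C else 0)
    else 0.

Definition is_svals (A : 'M[R[i]]_(n1, n2)) (s : {ffun 'I_r -> R}) : Prop :=
  [/\ (forall i, 0 <= s i),
      (forall i j : 'I_r, (i <= j)%N -> s j <= s i) &
      exists (U : 'M[R[i]]_n1) (V : 'M[R[i]]_n2),
        [/\ U \is unitarymx, V \is unitarymx &
            A = U *m rect_diag s *m (V ^t*)]].

(* the singular values of A (uniquely determined by the SVD) *)
Definition svals (A : 'M[R[i]]_(n1, n2)) : {ffun 'I_r -> R} :=
  xget 0 [set s | is_svals A s].

Definition sigma (X : tensor) (i : 'I_r) (k : 'I_n3) : R :=
  svals (fslice X k) i.

Definition wfun (rho : R -> R) (alpha : 'I_n3 -> R) (beta : 'I_n3 -> 'I_r -> R)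
    (X : tensor) : R :=
  \sum_(k < n3) \sum_(i < r) alpha k * beta k i * rho (sigma X i k).

Definition objF (lambda : R) (rho : R -> R) (f : tensor -> R) (X : tensor) : R :=
  lambda * \sum_(k < n3) rho (\sum_(i < r) rho (rho (sigma X i k))) + f X.

Definition alphaw (rho drho : R -> R) (X : tensor) (k : 'I_n3) : R :=
  drho (\sum_(i < r) rho (rho (sigma X i k))).
Definition betaw (rho drho : R -> R) (X : tensor) (k : 'I_n3) (i : 'I_r) : R :=
  drho (rho (sigma X i k)).

Definition assumption_A1 (rho drho : R -> R) (Lg : R) : Prop :=
  [/\ (forall t, 0 <= t -> 0 <= rho t),
      (forall t, 0 <= t ->
        (fun h => h^-1 * (rho (t + h) - rho t))
          @ within [set h | h != 0 /\ 0 <= t + h] (nbhs 0) --> drho t),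
      (forall x y a, 0 <= x -> 0 <= y -> 0 <= a -> a <= 1 ->
         a * rho x + (1 - a) * rho y <= rho (a * x + (1 - a) * y)),
      (forall s t, 0 <= s -> 0 <= t -> `|drho s - drho t| <= Lg * `|s - t|) &
      (forall t, 0 <= t -> 0 < drho t)].

Definition assumption_A2 (f : tensor -> R) (gradf : tensor -> tensor) (Lf : R)
  : Prop :=
  [/\ (forall X, 0 <= f X),
      (forall X (e : R), 0 < e -> exists2 d : R, 0 < d & forall Y,
         tnorm (Y - X) < d ->
         `|f Y - f X - tdot (gradf X) (Y - X)| <= e * tnorm (Y - X)),
      (forall X (e : R), 0 < e -> exists2 d : R, 0 < d & forall Y,
         tnorm (Y - X) < d -> tnorm (gradf Y - gradf X) < e),
      (forall X Y, tnorm (gradf X - gradf Y) <= Lf * tnorm (X - Y)) &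
      0 < Lf].

Definition assumption_A3 (F : tensor -> R) : Prop :=
  (forall M : R, exists R0 : R, forall X, R0 < tnorm X -> M < F X) /\
  (exists c : R, forall X, c <= F X).

(* Assumption A4 (mu^t >= theta_2^t L_f / theta_1^t read as
   mu^t theta_1^t >= theta_2^t L_f) *)
Definition assumption_A4 (eps Lf : R) (theta1 theta2 mu : nat -> R) : Prop :=
  [/\ 0 < eps, eps < 1,
      (forall t, 0 <= theta1 t /\ theta1 t < (1 - eps) / 2),
      (forall t, 0 <= theta2 t /\ theta2 t <= 1 / 2) &
      [/\ (forall t, mu t.+1 <= mu t),
          (forall t, mu t <= mu 0%N),
          (forall t, theta2 t * Lf <= mu t * theta1 t) &
          (forall t, (1 - theta2 t) * Lf / (1 - theta1 t - theta1 t.+1 - eps)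
                     <= mu t)]].

(* X^(t-1), with the convention X^(-1) = X^0 *)
Definition Xprev (X : nat -> tensor) (t : nat) : tensor :=
  if t is t'.+1 then X t' else X 0%N.

Definition tnnr_iter (lambda : R) (rho drho : R -> R) (gradf : tensor -> tensor)
    (theta1 theta2 mu : nat -> R) (X : nat -> tensor) : Prop :=
  forall t : nat,
    let Y := X t + theta1 t *: (X t - Xprev X t) in
    let Z := X t + theta2 t *: (X t - Xprev X t) in
    let G := fun W : tensor =>
      lambda * wfun rho (alphaw rho drho (X t)) (betaw rho drho (X t)) W
      + tdot (W - Y) (gradf Z) + mu t / 2 * tnorm (W - Y) ^+ 2 in
    forall W, G (X t.+1) <= G W.

Definition Hval (lambda : R) (rho : R -> R) (f : tensor -> R)
    (theta1 mu : nat -> R) (X : nat -> tensor) (t : nat) : R :=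
  objF lambda rho f (X t) + mu t * theta1 t / 2 * tnorm (X t - Xprev X t) ^+ 2.

End Tensors.

(* Main.v *)
Require Import Defs.
From HB Require Import structures.
From mathcomp Require Import all_boot all_order all_algebra.
From mathcomp Require Import all_classical all_reals all_analysis.
From mathcomp Require Import complex.
From mathcomp Require Import sesquilinear spectral.
From mathcomp Require Import ring lra.
Import Order.TTheory GRing.Theory Num.Theory.
Import numFieldNormedType.Exports.
Local Open Scope classical_set_scope.
Local Open Scope ring_scope.

Set Implicit Arguments.
Unset Strict Implicit.
Unset Printing Implicit Defensive.

Ltac tens := apply/ffunP => ?; rewrite !ffunE /GRing.scale /=; ring.

Section TensorLemmas.
Variables (R : realType) (n1 n2 n3 : nat).
Notation T := (tensor R n1 n2 n3).
Implicit Types X Y Z U V : T.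

Lemma tdot_lin (a b : R) X Y Z :
  tdot (a *: X + b *: Y) Z = a * tdot X Z + b * tdot Y Z.
Proof.
rewrite /tdot !mulr_sumr -big_split; apply: eq_bigr => i _.
rewrite !mulr_sumr -big_split; apply: eq_bigr => j _.
rewrite !mulr_sumr -big_split; apply: eq_bigr => k _.
rewrite !ffunE /= /GRing.scale /=; ring.
Qed.

Lemma tdotC X Y : tdot X Y = tdot Y X.
Proof.
rewrite /tdot; apply: eq_bigr => i _; apply: eq_bigr => j _.
by apply: eq_bigr => k _; rewrite mulrC.
Qed.

Lemma tdot_ge0 X : 0 <= tdot X X.
Proof.
rewrite /tdot; apply: sumr_ge0 => i _; apply: sumr_ge0 => j _.
by apply: sumr_ge0 => k _; rewrite -expr2 sqr_ge0.
Qed.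

Lemma tnorm_ge0 X : 0 <= tnorm X.
Proof. exact: sqrtr_ge0. Qed.

Lemma tnorm_sq X : tnorm X ^+ 2 = tdot X X.
Proof. by rewrite /tnorm sqr_sqrtr // tdot_ge0. Qed.

Lemma tdotZl (a : R) X Y : tdot (a *: X) Y = a * tdot X Y.
Proof.
have -> : a *: X = a *: X + 0 *: X by tens.
by rewrite tdot_lin mul0r addr0.
Qed.

Lemma tq2 (a b : R) U V : tdot (a *: U + b *: V) (a *: U + b *: V) =
  a ^+ 2 * tdot U U + 2 * a * b * tdot U V + b ^+ 2 * tdot V V.
Proof.
rewrite tdot_lin (tdotC U) (tdotC V) !tdot_lin (tdotC V U); ring.
Qed.

Lemma tnormZ (a : R) X : tnorm (a *: X) = `|a| * tnorm X.
Proof.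
rewrite /tnorm tdotZl tdotC tdotZl mulrA -expr2 sqrtrM ?sqr_ge0 //.
by rewrite sqrtr_sqr.
Qed.

Lemma tnormN X : tnorm (- X) = tnorm X.
Proof. by rewrite -scaleN1r tnormZ normrN normr1 mul1r. Qed.

End TensorLemmas.

Lemma is_derive_eps (R : realType) (phi : R -> R) s l :
  (forall e : R, 0 < e -> exists2 d : R, 0 < d & forall h, h != 0 -> `|h| < d ->
     `|(phi (s + h) - phi s) / h - l| <= e) -> is_derive s 1 phi l.
Proof.
move=> H.
have C : (fun h : R => h^-1 *: ((phi \o shift s) (h *: 1) - phi s)) @ 0^' --> l.
  apply/cvgrPdist_le => e e0.
  have [d d0 Hd] := H e e0.
  rewrite /dnbhs /within.
  rewrite /dnbhs /within /=; apply/nbhs_ballP; exists d => // h /= Hb hne.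
  rewrite /ball /= sub0r normrN in Hb.
  rewrite /= -[h%:A]/(h *: 1) /GRing.scale /= mulr1 (addrC h) distrC mulrC.
  exact: Hd.
apply: DeriveDef; first by apply/cvg_ex; exists l.
exact: cvg_lim C.
Qed.

Lemma descent (R : realType) (n1 n2 n3 : nat) (f : tensor R n1 n2 n3 -> R)
   gradf Lf : assumption_A2 f gradf Lf -> forall X Y,
   `|f Y - f X - tdot (gradf X) (Y - X)| <= Lf / 2 * tdot (Y - X) (Y - X).
Proof.
case=> _ Hfr _ Hlip L0 X Y.
set D := Y - X; set qD := tdot D D; set nD := tnorm D.
have qD0 : 0 <= qD := tdot_ge0 D.
have nD0 : 0 <= nD := tnorm_ge0 D.
have qnD : qD = nD ^+ 2 by rewrite /nD tnorm_sq.
suff H : forall c : R, c ^+ 2 = 1 -> c * (f Y - f X - tdot (gradf X) D) <= Lf / 2 * qD.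
  have H1 := H 1 (expr1n _ _); have H2 := H (-1) ltac:(by rewrite sqrrN expr1n).
  rewrite ler_norml; apply/andP; split; lra.
move=> c c2.
have nc : `|c| = 1.
  by apply/eqP; rewrite -(@eqrXn2 _ 2) ?normr_ge0 // real_normK ?num_real // c2 expr1n.
set t0 := tdot (gradf X) D.
pose phi s := c * (f (X + s *: D) - s * t0) - Lf / 2 * s ^+ 2 * qD.
pose dphi s := c * (tdot (gradf (X + s *: D)) D - t0) - Lf * s * qD.
have Der : forall s : R, is_derive s (1 : R) phi (dphi s).
  move=> s; apply: is_derive_eps => e e0.
  set P := X + s *: D.
  have e1 : 0 < e / 2 / (nD + 1) by rewrite !divr_gt0 //; lra.
  have [d d0 Hd] := Hfr P (e / 2 / (nD + 1)) e1.
  have LQ : 0 < Lf * qD + 1 by have := mulr_ge0 (ltW L0) qD0; lra.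
  exists (Num.min (d / (nD + 1)) (e / (Lf * qD + 1))).
    by rewrite lt_min; apply/andP; split; rewrite divr_gt0 //; lra.
  move=> h hne; rewrite lt_min => /andP [hd he].
  have eqP : X + (s + h) *: D = P + h *: D by rewrite /P; tens.
  have eqP2 : P + h *: D - P = h *: D by tens.
  have tn : tnorm (P + h *: D - P) = `|h| * nD by rewrite eqP2 tnormZ.
  have hpos : 0 < `|h| by rewrite normr_gt0.
  have := Hd (P + h *: D).
  rewrite tn eqP2 tdotC tdotZl tdotC.
  have : `|h| * nD < d.
    rewrite ltr_pdivlMr in hd; last lra.
    have := mulr_ge0 (normr_ge0 h) nD0; nra.
  move=> hh /(_ hh) HA.
  rewrite /phi /dphi eqP -/P.
  set A := f (P + h *: D) - f P - h * tdot (gradf P) D.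
  set t1 := tdot (gradf P) D.
  have -> : (c * (f (P + h *: D) - (s + h) * t0) - Lf / 2 * (s + h) ^+ 2 * qD -
     (c * (f P - s * t0) - Lf / 2 * s ^+ 2 * qD)) / h - (c * (t1 - t0) - Lf * s * qD)
     = (c * A - Lf / 2 * h ^+ 2 * qD) / h.
    by rewrite /A /t1; field.
  rewrite normrM normrV ?unitfE // ler_pdivrMr //.
  have HA2 : `|A| <= e / 2 * `|h|.
    apply: (le_trans HA).
    have nd1 : nD + 1 != 0 by rewrite gt_eqF //; lra.
    have r1 : nD / (nD + 1) <= 1 by rewrite ler_pdivrMr; lra.
    have -> : e / 2 / (nD + 1) * (`|h| * nD) = e / 2 * `|h| * (nD / (nD + 1)).
      by field.
    have : 0 <= e / 2 * `|h| by have := normr_ge0 h; nra.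
    nra.
  have HB : Lf / 2 * `|h| ^+ 2 * qD <= e / 2 * `|h|.
    rewrite ltr_pdivlMr // in he.
    have := mulr_ge0 (ltW L0) qD0; nra.
  apply: (le_trans (ler_normB _ _)).
  have hh2 : h ^+ 2 = `|h| ^+ 2 by rewrite real_normK ?num_real.
  have p0 : 0 <= Lf / 2 * h ^+ 2 * qD.
    rewrite hh2; have := normr_ge0 h; have := mulr_ge0 (ltW L0) qD0; nra.
  rewrite normrM nc mul1r (ger0_norm p0) hh2; lra.
have Cont : {within `[0, 1], continuous phi}.
  apply: derivable_within_continuous => s _.
  by have [] := Der s.
have [c0 c0in Hc] := @MVT R phi dphi 0 1 ltr01 (fun s _ => Der s) Cont.
move: c0in; rewrite in_itv /= => /andP [c00 c01].
have E1 : X + 1 *: D = Y by rewrite /D; tens.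
have E0 : X + 0 *: D = X by tens.
move: Hc; rewrite /phi E1 E0 subr0 mulr1 => Hc.
suff : dphi c0 <= 0 by move=> HH; move: Hc; rewrite /qD; lra.
rewrite /dphi.
set a := gradf (X + c0 *: D) - gradf X.
have ta : tdot (gradf (X + c0 *: D)) D - t0 = tdot a D.
  have -> : a = 1 *: gradf (X + c0 *: D) + (-1) *: gradf X by rewrite /a; tens.
  by rewrite tdot_lin /t0; ring.
rewrite ta.
have la : tnorm a <= Lf * (c0 * nD).
  have := Hlip (X + c0 *: D) X.
  have -> : X + c0 *: D - X = c0 *: D by tens.
  by rewrite tnormZ gtr0_norm.
have qa : tdot a a <= Lf ^+ 2 * c0 ^+ 2 * qD.
  rewrite -tnorm_sq qnD; have := tnorm_ge0 a; nra.
set k := Lf * c0.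
have k0 : 0 < k by rewrite mulr_gt0.
have := tdot_ge0 (1 *: a + (- (c * k)) *: D).
rewrite tq2 -/qD.
set ta' := tdot a D.
have -> : (- (c * k)) ^+ 2 = k ^+ 2 by rewrite sqrrN exprMn c2 mul1r.
move=> Hq.
have : 2 * k * (c * ta') <= 2 * k ^+ 2 * qD.
  have : Lf ^+ 2 * c0 ^+ 2 = k ^+ 2 by rewrite /k exprMn.
  nra.
move=> H2.
have : c * ta' <= k * qD.
  rewrite -(ler_pM2l (_ : 0 < 2 * k)); last lra.
  lra.
rewrite /k; lra.
Qed.
Lemma tangent (R : realType) (rho drho : R -> R) Lg :
  assumption_A1 rho drho Lg -> forall x y, 0 <= x -> 0 <= y ->
  rho x <= rho y + drho y * (x - y).
Proof.
case=> rho0 Hd Hconc _ _ x y x0 y0.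
have chord s : 0 < s -> s <= 1 -> s * (rho x - rho y) <= rho (y + s * (x - y)) - rho y.
  move=> s0 s1; have := Hconc x y s x0 y0 (ltW s0) s1.
  have -> : s * x + (1 - s) * y = y + s * (x - y) by ring.
  lra.
have lim e : 0 < e -> exists2 d : R, 0 < d & forall h, `|h| < d -> h != 0 -> 0 <= y + h ->
    `|drho y - h^-1 * (rho (y + h) - rho y)| < e.
  move=> e0; have := Hd y y0; move/cvgrPdist_lt => /(_ e e0).
  rewrite /within /= => /nbhs_ballP [d d0 Hb]; exists d => // h hd hne hy.
  apply: Hb; last by split.
  by rewrite /ball /= sub0r normrN.
have [xy|xy|->] := ltgtP x y; last by lra.
-
  set m := (rho x - rho y) / (x - y).
  have em : rho x - rho y = m * (x - y) by rewrite /m divfK // subr_eq0 lt_eqF.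
  suff : drho y <= m by move=> H; rewrite -lerBlDl em; nra.
  apply/ler_addgt0Pr => e e0.
  have [d d0 Hb] := lim e e0.
  set h := - Num.min (d / 2) (y - x).
  have hm : 0 < Num.min (d / 2) (y - x) by rewrite lt_min; apply/andP; split; lra.
  have hle1 : Num.min (d / 2) (y - x) <= d / 2 by rewrite ge_min lexx.
  have hle2 : Num.min (d / 2) (y - x) <= y - x by rewrite ge_min lexx orbT.
  have h0 : h < 0 by rewrite /h; lra.
  have := Hb h; rewrite /h normrN gtr0_norm // => /(_ ltac:(lra) ltac:(rewrite oppr_eq0 gt_eqF //) ltac:(lra)).
  set q := _^-1 * _ => Hq.
  set s := Num.min (d / 2) (y - x) / (y - x).
  have s0 : 0 < s by rewrite /s divr_gt0 // subr_gt0.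
  have s1 : s <= 1 by rewrite /s ler_pdivrMr ?subr_gt0 // mul1r.
  have := chord s s0 s1.
  have -> : y + s * (x - y) = y + h.
    by rewrite /s /h; field; rewrite subr_eq0 gt_eqF.
  have eq1 : s * (rho x - rho y) = h * m.
    by rewrite em /s /h; field; rewrite subr_eq0 gt_eqF.
  have eq2 : rho (y + h) - rho y = h * q by rewrite /q mulrA divff ?mul1r // lt_eqF.
  rewrite eq1 eq2 => hmq.
  have : q <= m by rewrite -(ler_nM2l h0).
  move: Hq; rewrite ltr_norml; lra.
-
  set m := (rho x - rho y) / (x - y).
  have em : rho x - rho y = m * (x - y) by rewrite /m divfK // subr_eq0 gt_eqF.
  suff : m <= drho y by move=> H; rewrite -lerBlDl em; nra.
  apply/ler_addgt0Pr => e e0.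
  have [d d0 Hb] := lim e e0.
  set h := Num.min (d / 2) (x - y).
  have h0 : 0 < h by rewrite lt_min; apply/andP; split; lra.
  have hle1 : h <= d / 2 by rewrite ge_min lexx.
  have hle2 : h <= x - y by rewrite ge_min lexx orbT.
  have := Hb h; rewrite gtr0_norm // => /(_ ltac:(lra) ltac:(rewrite gt_eqF //) ltac:(lra)).
  set q := _^-1 * _ => Hq.
  set s := h / (x - y).
  have s0 : 0 < s by rewrite /s divr_gt0 // subr_gt0.
  have s1 : s <= 1 by rewrite /s ler_pdivrMr ?subr_gt0 // mul1r.
  have := chord s s0 s1.
  have -> : y + s * (x - y) = y + h.
    by rewrite /s; field; rewrite subr_eq0 gt_eqF.
  have eq1 : s * (rho x - rho y) = h * m.
    by rewrite em /s; field; rewrite subr_eq0 gt_eqF.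
  have eq2 : rho (y + h) - rho y = h * q by rewrite /q mulrA divff ?mul1r // gt_eqF.
  rewrite eq1 eq2 => hmq.
  have : m <= q by rewrite -(ler_pM2l h0).
  move: Hq; rewrite ltr_norml; lra.
Qed.

Lemma sigma_ge0 (R : realType) (n1 n2 n3 : nat) (X : tensor R n1 n2 n3) i k :
  0 <= sigma X i k.
Proof.
rewrite /sigma /svals; case: xgetP => [s _ [H _ _] | _]; first exact: H.
by rewrite ffunE.
Qed.

Lemma F_major (R : realType) (n1 n2 n3 : nat) (rho drho : R -> R) Lg
  (f : tensor R n1 n2 n3 -> R) lambda (X0 X1 : tensor R n1 n2 n3) :
  assumption_A1 rho drho Lg -> 0 < lambda ->
  objF lambda rho f X1 - objF lambda rho f X0 <=
  lambda * (wfun rho (alphaw rho drho X0) (betaw rho drho X0) X1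
          - wfun rho (alphaw rho drho X0) (betaw rho drho X0) X0) + (f X1 - f X0).
Proof.
move=> A1 l0; have tg := tangent A1.
case: A1 => rho0 _ _ _ drho0.
suff H : \sum_(k < n3) rho (\sum_(i < r n1 n2) rho (rho (sigma X1 i k))) -
         \sum_(k < n3) rho (\sum_(i < r n1 n2) rho (rho (sigma X0 i k))) <=
         wfun rho (alphaw rho drho X0) (betaw rho drho X0) X1
          - wfun rho (alphaw rho drho X0) (betaw rho drho X0) X0.
  rewrite /objF; have := ler_wpM2l (ltW l0) H; lra.
rewrite /wfun -!sumrB; apply: ler_sum => k _.
set S0 := \sum_(i < r n1 n2) rho (rho (sigma X0 i k)).
set S1 := \sum_(i < r n1 n2) rho (rho (sigma X1 i k)).
have S00 : 0 <= S0 by apply: sumr_ge0 => i _; apply/rho0/rho0/sigma_ge0.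
have S10 : 0 <= S1 by apply: sumr_ge0 => i _; apply/rho0/rho0/sigma_ge0.
have h1 : S1 - S0 <= \sum_(i < r n1 n2) betaw rho drho X0 k i *
            (rho (sigma X1 i k) - rho (sigma X0 i k)).
  rewrite /S1 /S0 -sumrB; apply: ler_sum => i _.
  have := tg (rho (sigma X1 i k)) (rho (sigma X0 i k))
    (rho0 _ (sigma_ge0 _ _ _)) (rho0 _ (sigma_ge0 _ _ _)).
  rewrite /betaw; lra.
have h2 := tg S1 S0 S10 S00.
have a0 : 0 < alphaw rho drho X0 k by apply: drho0.
have h3 := ler_wpM2l (ltW a0) h1.
have -> : \sum_(i < r n1 n2) alphaw rho drho X0 k * betaw rho drho X0 k i * rho (sigma X1 i k) -
  \sum_(i < r n1 n2) alphaw rho drho X0 k * betaw rho drho X0 k i * rho (sigma X0 i k) =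
  alphaw rho drho X0 k * \sum_(i < r n1 n2) betaw rho drho X0 k i *
            (rho (sigma X1 i k) - rho (sigma X0 i k)).
  by rewrite -sumrB mulr_sumr; apply: eq_bigr => i _; ring.
move: h2 h3; rewrite /alphaw -/S0; lra.
Qed.

Lemma final_ineq (R : realType) (L mu mu' th1 th1' th2 eps qE qD d A B : R) :
 0 < L -> 0 < eps -> 0 <= th1' -> mu' <= mu -> 0 <= th2 -> th2 <= 1/2 ->
 th2 * L <= mu * th1 -> (1 - th2) * L <= mu * (1 - th1 - th1' - eps) -> L <= mu ->
 0 <= qE -> 0 <= qD -> 2 * d <= qE + qD ->
 A - B <= - (mu / 2) * qE + mu * th1 * d + L / 2 * qE - L * th2 * d + L * th2 ^+ 2 * qD ->
 A + mu' * th1' / 2 * qE - (B + mu * th1 / 2 * qD) <= - (eps * L / 2) * qE.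
Proof.
move=> L0 e0 t1' mm t20 t21 H1 H2 Lm qE0 qD0 dd HAB.
have h1 : (mu * th1 - L * th2) * (2 * d) <= (mu * th1 - L * th2) * (qE + qD).
  by apply: ler_wpM2l => //; lra.
have h2 : mu' * th1' * qE <= mu * th1' * qE.
  by apply: ler_wpM2r => //; apply: ler_wpM2r.
have cE : - mu + L + mu * th1 - L * th2 + mu * th1' + eps * L <= 0.
  have : eps * L <= eps * mu by apply: ler_wpM2l => //; lra.
  lra.
have h3 := mulr_le0_ge0 cE qE0.
have cD : L * th2 * (2 * th2 - 1) <= 0.
  apply: mulr_ge0_le0; [apply: mulr_ge0 => //; lra | lra].
have h4 := mulr_le0_ge0 cD qD0.
nra.
Qed.

Unset Implicit Arguments.
Set Strict Implicit.

Theorem lemmaA3 (R : realType) (n1 n2 n3 : nat)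
    (rho drho : R -> R) (Lg : R)
    (f : tensor R n1 n2 n3 -> R) (gradf : tensor R n1 n2 n3 -> tensor R n1 n2 n3)
    (Lf lambda eps : R) (theta1 theta2 mu : nat -> R)
    (X : nat -> tensor R n1 n2 n3) :
  assumption_A1 rho drho Lg ->
  assumption_A2 f gradf Lf ->
  0 < lambda ->
  assumption_A3 (objF lambda rho f) ->
  assumption_A4 eps Lf theta1 theta2 mu ->
  tnnr_iter lambda rho drho gradf theta1 theta2 mu X ->
  (forall t : nat,
     Hval lambda rho f theta1 mu X t.+1 - Hval lambda rho f theta1 mu X t
       <= - (eps * Lf / 2) * tnorm (X t.+1 - X t) ^+ 2) /\
  (forall t : nat, Hval lambda rho f theta1 mu X t.+1 <= Hval lambda rho f theta1 mu X t) /\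
  ((fun t => tnorm (X t - X t.+1)) @ \oo --> 0).
Proof.
move=> A1 A2 l0 [_ [cF HcF]] [e0 e1 Ht1 Ht2 [Hmu1 _ Hm2 Hm3]] Hit.
have L0 : 0 < Lf by case: A2.
have muL : forall t, Lf <= mu t.
  move=> t; have [a0 a1] := Ht1 t; have [b0 b1] := Ht1 t.+1; have [c0 c1] := Ht2 t.
  have den : 0 < 1 - theta1 t - theta1 t.+1 - eps by lra.
  have H2 := Hm3 t; rewrite ler_pdivrMr // in H2.
  have H1 := Hm2 t.
  have mu0 : 0 < mu t by nra.
  nra.
have step : forall t : nat,
     Hval lambda rho f theta1 mu X t.+1 - Hval lambda rho f theta1 mu X t
       <= - (eps * Lf / 2) * tnorm (X t.+1 - X t) ^+ 2.
  move=> t.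
  have Hopt := Hit t (X t).
  rewrite /= in Hopt.
  rewrite /Hval /=.
  set X0 := X t in Hopt *; set X1 := X t.+1 in Hopt *; set Xp := Xprev X t in Hopt *.
  set th1 := theta1 t in Hopt *; set th2 := theta2 t in Hopt *.
  set D := X0 - Xp in Hopt *; set E := X1 - X0.
  set g := gradf (X0 + th2 *: D) in Hopt *.
  have ex1 : X1 - (X0 + th1 *: D) = 1 *: E + (- th1) *: D by rewrite /E; tens.
  have ex2 : X0 - (X0 + th1 *: D) = 0 *: E + (- th1) *: D by tens.
  have ex3 : X1 - (X0 + th2 *: D) = 1 *: E + (- th2) *: D by rewrite /E; tens.
  have ex4 : X0 - (X0 + th2 *: D) = 0 *: E + (- th2) *: D by tens.
  rewrite ex1 ex2 !tnorm_sq !tq2 !tdot_lin in Hopt.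
  have d1 := descent A2 (X0 + th2 *: D) X1.
  rewrite ex3 (tdotC (gradf _)) tdot_lin tq2 -/g ler_norml in d1.
  have d0 := descent A2 (X0 + th2 *: D) X0.
  rewrite ex4 (tdotC (gradf _)) tdot_lin tq2 -/g ler_norml in d0.
  case/andP: d1 => _ d1; case/andP: d0 => d0 _.
  have hF := F_major f X0 X1 A1 l0.
  have dd := tdot_ge0 (1 *: E + (-1) *: D); rewrite tq2 in dd.
  rewrite !tnorm_sq -/E.
  have [a0 a1] := Ht1 t; have [b0 b1] := Ht1 t.+1; have [c0 c1] := Ht2 t.
  apply: (@final_ineq R Lf (mu t) (mu t.+1) th1 (theta1 t.+1) th2 eps
            (tdot E E) (tdot D D) (tdot E D)) => //.
  - exact: Hm2.
  - have H2 := Hm3 t; rewrite ler_pdivrMr // in H2; lra.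
  - exact: tdot_ge0.
  - exact: tdot_ge0.
  - lra.
  - lra.
split; first exact: step.
have dec : forall t, Hval lambda rho f theta1 mu X t.+1 <= Hval lambda rho f theta1 mu X t.
  move=> t; have := step t; have := sqr_ge0 (tnorm (X t.+1 - X t)).
  have : 0 <= eps * Lf / 2 by have := mulr_gt0 e0 L0; lra.
  nra.
split; first exact: dec.
set H := Hval lambda rho f theta1 mu X.
have Hlb : forall t, cF <= H t.
  move=> t; rewrite /H /Hval; have := HcF (X t).
  have [a0 _] := Ht1 t; have := muL t.
  have := sqr_ge0 (tnorm (X t - Xprev X t)).
  have := mulr_ge0 (mulr_ge0 (ltW (lt_le_trans L0 (muL t))) a0) (sqr_ge0 (tnorm (X t - Xprev X t))).
  lra.
have cvH : cvgn H.
  apply: nonincreasing_is_cvgn; first exact/nonincreasing_seqP.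
  by exists cF => _ [n _ <-]; exact: Hlb.
have cvH' : (fun t => H t.+1) @ \oo --> limn H.
  by rewrite (cvg_shiftS H); exact: cvH.
have cvD : (fun t => H t - H t.+1) @ \oo --> limn H - limn H.
  exact: cvgB cvH cvH'.
rewrite subrr in cvD.
apply/cvgrPdist_lt => e ep.
have pe : 0 < e ^+ 2 * (eps * Lf / 2).
  by apply: mulr_gt0; [exact: exprn_gt0 | have := mulr_gt0 e0 L0; lra].
move/cvgrPdist_lt: cvD => /(_ _ pe).
apply: filterS => t Ht.
rewrite sub0r normrN ger0_norm; last exact: tnorm_ge0.
have -> : X t - X t.+1 = - (X t.+1 - X t) by rewrite opprB.
rewrite tnormN.
have := step t; rewrite -/H => Hs.
move: Ht; rewrite sub0r normrN => Ht.
have Htt := le_lt_trans (ler_norm _) Ht.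
have n0 := tnorm_ge0 (X t.+1 - X t).
have epl : 0 < eps * Lf / 2 by have := mulr_gt0 e0 L0; lra.
have : (eps * Lf / 2) * tnorm (X t.+1 - X t) ^+ 2 < (eps * Lf / 2) * e ^+ 2 by lra.
rewrite ltr_pM2l // => Hn2; nra.
Qed.
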